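(* Let $K\in\mathcal{U}C_b^3(\mathbb{R}^d,\mathbb{R}^{d\times d})$ and define, for $\xi\in\mathcal{M}$, $B(\xi)=K\ast\xi$. Then $B$ maps $\mathcal{M}$ continuously into $C_b^2(\mathbb{R}^d,\mathbb{R}^d)$ (continuity with respect to the metric $d$ on $\mathcal{M}$), and there is a constant $C_B>0$ such that for all $\xi,\xi'\in\mathcal{M}$: (B1) $\|B(\xi)\|_{C_b^2}\le C_B(\|\xi\|+1)$; (B2) $\|B(\xi)-B(\xi')\|_\infty\le C_B\|\xi-\xi'\|$; (B3) $\|DB(\xi)-DB(\xi')\|_\infty\le C_B\|\xi-\xi'\|$, where $DB(\xi)$ denotes the spatial derivative of the vector field $B(\xi)$.
   Context: $C_b^k(\mathbb{R}^d,\mathbb{R}^m)$ is the space of $C^k$ functions bounded together with all derivatives up to order $k$ (with norm $\|\cdot\|_{C^k_b}$ the sum of the sup norms of these derivatives); $\mathcal{U}C_b^3(\mathbb{R}^d,\mathbb{R}^m)$ is the subset of $C_b^3$ of those $f$ with $f$, $Df$, $D^2f$ uniformly continuous. $\mathcal{M}$ is the dual space of $C_b(\mathbb{R}^d;\mathbb{R}^d)$ (bounded continuous vector fields with sup norm $\|\cdot\|_\infty$), with dual norm $|\xi|_{\mathcal{M}}=\sup_{\|\theta\|_\infty\le 1}|\xi(\theta)|$. The weak norm is $\|\xi\|=\sup\{\xi(\theta):\|\theta\|_\infty+\mathrm{Lip}(\theta)\le 1\}$, $\mathrm{Lip}(\theta)$ the Lipschitz constant, and $d(\xi,\xi')=\|\xi-\xi'\|$.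 For $\xi\in\mathcal{M}$ and continuous bounded $K:\mathbb{R}^d\to\mathbb{R}^{d\times d}$, $K\ast\xi$ is the vector field with components $(K\ast\xi)_i(x)=\xi(K_{i\cdot}(x-\cdot))$, where $K_{i\cdot}(z)=(K_{ij}(z))_{j=1,\dots,d}$. *)

(* Defs.v *)
(* R^d is modelled by 'rV[R]_d (max norm). *)
From HB Require Import structures.
From mathcomp Require Import all_boot all_order all_algebra.
From mathcomp Require Import all_classical all_reals all_analysis.
Set Implicit Arguments. Unset Strict Implicit. Unset Printing Implicit Defensive.
Import Order.TTheory GRing.Theory Num.Theory.
Import numFieldNormedType.Exports.
Local Open Scope classical_set_scope.
Local Open Scope ring_scope.

Definition evec (R : realType) (d : nat) (i : 'I_d) : 'rV[R]_d := delta_mx 0 i.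

Definition pder (R : realType) (d : nat) (V : normedModType R)
  (s : seq 'I_d) (f : 'rV[R]_d -> V) : 'rV[R]_d -> V :=
  foldr (fun i g => fun x => derive g x (evec R i)) f s.

Definition bounded_fun (R : realType) (d : nat) (V : normedModType R)
  (g : 'rV[R]_d -> V) : Prop := exists M : R, forall x, `|g x| <= M.

Definition unif_cont (R : realType) (d : nat) (V : normedModType R)
  (g : 'rV[R]_d -> V) : Prop :=
  forall e : R, 0 < e -> exists2 del : R, 0 < del &
    forall x y, `|x - y| < del -> `|g x - g y| < e.

Definition Cb (R : realType) (d : nat) (V : normedModType R) (k : nat)
  (f : 'rV[R]_d -> V) : Prop :=
  (forall s : seq 'I_d, (size s < k)%N ->
     forall (i : 'I_d) (x : 'rV[R]_d), derivable (pder s f) x (evec R i)) /\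
  (forall s : seq 'I_d, (size s <= k)%N ->
     continuous (pder s f) /\ bounded_fun (pder s f)).

Definition UCb3 (R : realType) (d : nat) (V : normedModType R)
  (f : 'rV[R]_d -> V) : Prop :=
  Cb 3 f /\ forall s : seq 'I_d, (size s <= 2)%N -> unif_cont (pder s f).

Definition supnorm (R : realType) (d : nat) (V : normedModType R)
  (g : 'rV[R]_d -> V) : R := sup [set `|g x| | x in setT].

Definition supnorm_ord (R : realType) (d : nat) (V : normedModType R)
  (j : nat) (f : 'rV[R]_d -> V) : R :=
  sup [set r | exists (s : seq 'I_d) (x : 'rV[R]_d), size s = j /\ r = `|pder s f x|].

Definition Cb_norm (R : realType) (d : nat) (V : normedModType R)
  (k : nat) (f : 'rV[R]_d -> V) : R :=
  \sum_(j < k.+1) supnorm_ord j f.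

Definition BCvf (R : realType) (d : nat) (th : 'rV[R]_d -> 'rV[R]_d) : Prop :=
  continuous th /\ bounded_fun th.

(* the dual space M of C_b(R^d;R^d): bounded linear functionals on it
   (only their values on BCvf matter) *)
Definition in_M (R : realType) (d : nat) (xi : ('rV[R]_d -> 'rV[R]_d) -> R) : Prop :=
  (forall (a : R) th1 th2, BCvf th1 -> BCvf th2 ->
      xi (fun x => a *: th1 x + th2 x) = a * xi th1 + xi th2) /\
  (exists c : R, forall th, BCvf th -> `|xi th| <= c * supnorm th).

Definition lip_le (R : realType) (d : nat) (th : 'rV[R]_d -> 'rV[R]_d) (L : R) : Prop :=
  forall x y, `|th x - th y| <= L * `|x - y|.

Definition wnorm (R : realType) (d : nat) (xi : ('rV[R]_d -> 'rV[R]_d) -> R) : R :=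
  sup [set xi th | th in [set th | BCvf th /\
         exists L : R, lip_le th L /\ supnorm th + L <= 1]].

Definition Msub (R : realType) (d : nat) (xi xi' : ('rV[R]_d -> 'rV[R]_d) -> R) :=
  fun th => xi th - xi' th.

Definition Kconv (R : realType) (d : nat) (K : 'rV[R]_d -> 'M[R]_(d,d))
  (xi : ('rV[R]_d -> 'rV[R]_d) -> R) : 'rV[R]_d -> 'rV[R]_d :=
  fun x => \row_(i < d) xi (fun z => row i (K (x - z))).

(* Main.v *)
Require Import Defs.
From HB Require Import structures.
From mathcomp Require Import all_boot all_order all_algebra.
From mathcomp Require Import all_classical all_reals all_analysis.
From mathcomp Require Import ring lra.
Set Implicit Arguments.
Import Order.TTheory GRing.Theory Num.Theory.
Import numFieldNormedType.Exports.
Local Open Scope classical_set_scope.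
Local Open Scope ring_scope.

Section Aux.
Context {R : realType}.

Lemma mx_entry_le m n (A : 'M[R]_(m,n)) a b : `|A a b| <= `|A|.
Proof.
rewrite [leRHS]/Num.Def.normr/= mx_normrE.
by apply: le_trans; last exact: (le_bigmax _ _ (a, b)).
Qed.

Lemma mx_norm_le m n (A : 'M[R]_(m,n)) e : 0 <= e -> (forall a b, `|A a b| <= e) -> `|A| <= e.
Proof.
move=> e0 H; rewrite [leLHS]/Num.Def.normr/= mx_normrE (bigmax_le _ e0)//=.
Qed.

Lemma row_norm_le m n (A : 'M[R]_(m,n)) a : `|row a A| <= `|A|.
Proof.
apply: mx_norm_le => // i j; rewrite mxE; exact: mx_entry_le.
Qed.

Lemma cont_le {V W W' : normedModType R} (f : V -> W) (g : V -> W') x :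
  {for x, continuous f} -> (forall y, `|g x - g y| <= `|f x - f y|) -> {for x, continuous g}.
Proof.
move=> /cvgrPdist_lt cf H; apply/cvgrPdist_lt => e e0.
by near do apply: le_lt_trans (H _) _; apply: cf.
Unshelve. all: by end_near. Qed.

End Aux.

Lemma lip_cases {R : realType} (n : nat) (th : 'rV[R]_n -> 'rV[R]_n) L :
  lip_le th L -> 0 <= L \/ forall x, `|th x| = 0.
Proof.
case: n th => [|k] th H.
  right => x; apply/eqP; rewrite eq_le normr_ge0 andbT.
  by apply: mx_norm_le => // a [].
left; have := H 0 (delta_mx 0 0); rewrite sub0r normrN.
have hp : 0 < `|delta_mx 0 0 : 'rV[R]_k.+1|.
  apply: (lt_le_trans _ (mx_entry_le _ 0 0)); by rewrite mxE !eqxx normr1.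
move=> h; rewrite -(pmulr_lge0 _ hp); exact: le_trans h.
Qed.

Section M.
Context {R : realType} {d : nat}.
Implicit Types (th f g : 'rV[R]_d -> 'rV[R]_d) (xi : ('rV[R]_d -> 'rV[R]_d) -> R).

Lemma BCvf_lin (a : R) f g : BCvf f -> BCvf g -> BCvf (fun z => a *: f z + g z).
Proof.
move=> [cf [Mf bf]] [cg [Mg bg]]; split.
  move=> x; have hz : {for x, continuous (fun z => a *: f z)} by exact: continuousZl_tmp (cf x).
  exact: (continuousD hz (cg x)).
exists (`|a| * Mf + Mg) => x; rewrite (le_trans (ler_normD _ _))// lerD// normrZ.
by rewrite ler_wpM2l.
Qed.

Lemma BCvf0 : BCvf (fun _ : 'rV[R]_d => (0 : 'rV[R]_d)).
Proof. split; first by move=> x; exact: cst_continuous. by exists 0 => x; rewrite normr0. Qed.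

Lemma BCvfZ (a : R) f : BCvf f -> BCvf (fun z => a *: f z).
Proof.
move=> bf; have := BCvf_lin a bf BCvf0.
by have -> : (fun z => a *: f z + 0) = (fun z => a *: f z) by apply/funext => z; rewrite addr0.
Qed.

Lemma BCvfB f g : BCvf f -> BCvf g -> BCvf (fun z => f z - g z).
Proof.
move=> bf bg; have := BCvf_lin (-1) bg bf.
have -> // : (fun z => (-1) *: g z + f z) = (fun z => f z - g z).
by apply/funext => z; rewrite scaleN1r addrC.
Qed.

Lemma xi0 xi : in_M xi -> xi (fun _ => 0) = 0.
Proof.
move=> [lin _]; have := lin 1 _ _ BCvf0 BCvf0.
have -> : (fun x : 'rV[R]_d => 1 *: (0 : 'rV[R]_d) + 0) = (fun _ => 0).
  by apply/funext => z; rewrite scaler0 addr0.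
by move/eqP; rewrite mul1r -subr_eq subrr eq_sym => /eqP.
Qed.

Lemma xiZ xi (a : R) f : in_M xi -> BCvf f -> xi (fun z => a *: f z) = a * xi f.
Proof.
move=> hxi bf; have := hxi.1 a _ _ bf BCvf0; rewrite xi0 // addr0 => <-.
by congr xi; apply/funext => z; rewrite addr0.
Qed.

Lemma xiB xi f g : in_M xi -> BCvf f -> BCvf g -> xi (fun z => f z - g z) = xi f - xi g.
Proof.
move=> hxi bf bg; have := hxi.1 (-1) _ _ bg bf.
have -> : (fun z => (-1) *: g z + f z) = (fun z => f z - g z).
  by apply/funext => z; rewrite scaleN1r addrC.
by move=> ->; rewrite mulN1r addrC.
Qed.

Lemma bnd_ub (g : 'rV[R]_d -> R) : (exists M, forall x, `|g x| <= M) ->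
  forall x, `|g x| <= sup [set `|g x| | x in setT].
Proof.
move=> [M hM] x; apply: ub_le_sup; last by exists x.
by exists M => _ [y _ <-].
Qed.

Lemma supnorm_ub th : Defs.bounded_fun th -> forall x, `|th x| <= supnorm th.
Proof. move=> [M hM] x; rewrite /supnorm; apply: ub_le_sup; last by exists x. by exists M => _ [y _ <-]. Qed.

Lemma supnorm_le th (M : R) : (forall x, `|th x| <= M) -> supnorm th <= M.
Proof. move=> hM; rewrite /supnorm; apply: ge_sup; first by exists `|th 0|, 0. by move=> _ [y _ <-]. Qed.

Lemma supnorm_ge0 th : Defs.bounded_fun th -> 0 <= supnorm th.
Proof. by move=> b; apply: le_trans (supnorm_ub b 0). Qed.

Lemma xi_bnd xi : in_M xi -> exists2 c, 0 <= c & forall th, BCvf th -> `|xi th| <= c * supnorm th.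
Proof.
move=> [_ [c hc]]; exists `|c| => // th bth; apply: le_trans (hc _ bth) _.
apply: ler_wpM2r; first exact: supnorm_ge0 bth.2.
exact: ler_norm.
Qed.

Lemma Msub_in_M xi xi' : in_M xi -> in_M xi' -> in_M (Msub xi xi').
Proof.
move=> h1 h2; split.
  by move=> a t1 t2 b1 b2; rewrite /Msub h1.1 // h2.1 //; ring.
have [c1 c10 hc1] := xi_bnd h1; have [c2 c20 hc2] := xi_bnd h2.
exists (c1 + c2) => th bth; rewrite /Msub (le_trans (ler_normB _ _))// mulrDl.
by rewrite lerD ?hc1 ?hc2.
Qed.

Definition Wset xi := [set xi th | th in [set th | BCvf th /\
         exists L : R, lip_le th L /\ supnorm th + L <= 1]].

Lemma supnorm0 : supnorm (fun _ : 'rV[R]_d => (0 : 'rV[R]_d)) = 0.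
Proof.
apply/le_anti/andP; split; last exact: supnorm_ge0 BCvf0.2.
by apply: supnorm_le => x; rewrite normr0.
Qed.

Lemma wnorm_ub xi th L : in_M xi -> BCvf th -> lip_le th L -> supnorm th + L <= 1 ->
  xi th <= wnorm xi.
Proof.
move=> hxi bth lth sl; apply: ub_le_sup; last by exists th => //; split => //; exists L.
have [c c0 hc] := xi_bnd hxi; exists c => _ [t [bt [L' [lt' sl']]] <-].
apply: le_trans (ler_norm _) _; apply: le_trans (hc _ bt) _.
rewrite -[leRHS]mulr1 ler_wpM2l //.
have [L'0|t0] := lip_cases lt'.
  by apply: le_trans sl'; rewrite lerDl.
apply: (@le_trans _ _ 0); last exact: ler01.
by apply: supnorm_le => x; rewrite t0.
Qed.

End M.

Section W.
Context {R : realType} {d : nat}.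
Implicit Types (th f g : 'rV[R]_d -> 'rV[R]_d) (xi : ('rV[R]_d -> 'rV[R]_d) -> R).

Lemma wnorm_ge0 xi : in_M xi -> 0 <= wnorm xi.
Proof.
move=> hxi; rewrite -(xi0 hxi); apply: (@wnorm_ub _ _ _ _ 0) => //.
- exact: BCvf0.
- by move=> x y; rewrite subrr normr0 mul0r.
- by rewrite supnorm0 addr0 ler01.
Qed.

Lemma wnorm_bound xi th L : in_M xi -> BCvf th -> lip_le th L -> 0 <= L ->
  `|xi th| <= wnorm xi * (supnorm th + L).
Proof.
move=> hxi bth lth L0.
have s0 := supnorm_ge0 bth.2.
have [se0|sn0] := eqVneq (supnorm th + L) 0.
  have -> : th = (fun _ => 0).
    apply/funext => x; apply/eqP; rewrite -normr_le0.
    apply: le_trans (supnorm_ub bth.2 x) _; lra.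
  rewrite xi0 // normr0; apply: mulr_ge0; first exact: wnorm_ge0.
  by rewrite supnorm0 add0r.
have sp : 0 < supnorm th + L by rewrite lt_def sn0 addr_ge0.
set s := supnorm th + L in sp sn0 *.
have key a : `|a| = s^-1 -> a * xi th <= wnorm xi.
  move=> ha; rewrite -xiZ //; apply: (wnorm_ub (L := L / s)).
  - exact: hxi.
  - exact: BCvfZ.
  - move=> x y; rewrite -scalerBr normrZ ha mulrAC.
    rewrite mulrC; apply: ler_wpM2r; [by rewrite invr_ge0 ltW | exact: lth].
  - apply: (@le_trans _ _ (supnorm th / s + L / s)).
      rewrite lerD2r; apply: supnorm_le => x; rewrite normrZ ha mulrC.
      by rewrite ler_pM2r ?invr_gt0 //; exact: supnorm_ub bth.2 x.
    by rewrite -mulrDl divff.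
have h1 : s^-1 * xi th <= wnorm xi by apply: key; rewrite ger0_norm // invr_ge0 ltW.
have h2 : - s^-1 * xi th <= wnorm xi by apply: key; rewrite normrN ger0_norm // invr_ge0 ltW.
have e1 : xi th <= s * wnorm xi.
  by have := ler_wpM2l (ltW sp) h1; rewrite mulrA mulfV // mul1r.
have e2 : - xi th <= s * wnorm xi.
  by have := ler_wpM2l (ltW sp) h2; rewrite mulrA mulrN mulfV // mulN1r.
rewrite ler_norml [wnorm xi * _]mulrC; apply/andP; split; lra.
Qed.

End W.

Section Line.
Context {R : realType} {d : nat}.

Lemma line_der (g : 'rV[R]_d -> R) q v t : derivable g (q + t *: v) v ->
  derivable (fun s : R => g (q + s *: v)) t 1 /\
  derive (fun s : R => g (q + s *: v)) t 1 = derive g (q + t *: v) v.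
Proof.
have E : (fun h : R => h^-1 *: (((fun s : R => g (q + s *: v)) \o shift t) (h *: 1)
            - g (q + t *: v)))
       = (fun h : R => h^-1 *: ((g \o shift (q + t *: v)) (h *: v) - g (q + t *: v))).
  apply/funext => h /=; rewrite /shift; congr (_ *: (g _ - _)).
  by rewrite -[h *: 1]/(h * 1) mulr1 scalerDl addrCA addrC.
by rewrite /derivable /derive E => dg; split.
Qed.

Lemma line_mvt m n (G : 'rV[R]_d -> 'M[R]_(m,n)) v a b :
  (forall p, derivable G p v) -> forall q (h : R),
  exists2 c : R, `|c| <= `|h| &
    G (q + h *: v) a b - G q a b = h * derive G (q + c *: v) v a b.
Proof.
move=> dG q h; set f := fun s : R => G (q + s *: v) a b.
have df (t : R) : is_derive t 1 f (derive G (q + t *: v) v a b).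
  have dg : derivable (fun x => G x a b) (q + t *: v) v by move/derivable_mxP: (dG (q + t *: v)); apply.
  have [df1 df2] := line_der dg.
  rewrite derive_mx // mxE -df2; exact: derivableP.
have cf (t : R) : {for t, continuous f}.
  by apply: differentiable_continuous; apply/derivable1_diffP; exact: (df t).(ex_derive).
have f0 : G q a b = f 0 by rewrite /f scale0r addr0.
rewrite f0; have [h0|h0] := leP 0 h.
  have [c /andP[c0 ch] ->] := MVT_segment h0 (fun x _ => df x) (continuous_subspaceT cf).
  by exists c; [rewrite !ger0_norm // (le_trans c0) | rewrite subr0 mulrC].
have [c /andP[c0 ch] e] := MVT_segment (ltW h0) (fun x _ => df x) (continuous_subspaceT cf).
exists c.
  by rewrite !ler0_norm ?lerN2 // ?(le_trans _ ch) // ltW.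
have -> : G (q + h *: v) a b = f h by [].
by rewrite -[f h - f 0]opprB e sub0r mulrN opprK mulrC.
Qed.

End Line.

Section Lip.
Context {R : realType} {d : nat}.

Lemma evec_norm (i : 'I_d) : `|evec R i| <= 1.
Proof.
apply: mx_norm_le => // a b; rewrite /evec mxE.
by case: (_ && _); rewrite ?normr1 ?normr0.
Qed.

Lemma evecE (i j : 'I_d) : evec R i 0 j = (j == i)%:R.
Proof. by rewrite /evec mxE eqxx. Qed.

Lemma lip_of_der m n (G : 'rV[R]_d -> 'M[R]_(m,n)) M : 0 <= M ->
  (forall i p, derivable G p (evec R i)) ->
  (forall i p, `|derive G p (evec R i)| <= M) ->
  forall x y, `|G x - G y| <= (d%:R * M) * `|x - y|.
Proof.
move=> M0 dG bG x y; apply: mx_norm_le; first by rewrite !mulr_ge0.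
move=> a b; rewrite !mxE.
pose p (k : nat) : 'rV[R]_d := \row_j (if (j < k)%N then x 0 j else y 0 j).
have px : p d = x by apply/rowP => j; rewrite mxE ltn_ord.
have py : p 0%N = y by apply/rowP => j; rewrite mxE.
have -> : G x a b - G y a b = \sum_(k < d) (G (p k.+1) a b - G (p k) a b).
  rewrite -(big_mkord xpredT (fun k => G (p k.+1) a b - G (p k) a b)).
  by rewrite telescope_sumr // px py.
rewrite (le_trans (ler_norm_sum _ _ _))//.
have -> : d%:R * M * `|x - y| = \sum_(k < d) (M * `|x - y|).
  by rewrite sumr_const card_ord -mulrA mulr_natl.
apply: ler_sum => k _.
have pk : p k.+1 = p k + (x 0 k - y 0 k) *: evec R k.
  apply/rowP => j; rewrite !mxE eqxx /= ltnS leq_eqVlt.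
  have [->|jk] := eqVneq j k; first by rewrite eqxx ltnn /= mulr1 addrC subrK.
  by rewrite mulr0 addr0 (negbTE (_ : (nat_of_ord j != k))) //; apply: contra jk => /eqP/val_inj ->.
rewrite pk; have [c' _ ->] := line_mvt a b (dG k) (p k) (x 0 k - y 0 k).
rewrite normrM mulrC; apply: ler_pM => //.
  exact: le_trans (mx_entry_le _ a b) (bG _ _).
by have := mx_entry_le (x - y) 0 k; rewrite !mxE.
Qed.

Lemma dq_unif m n (G : 'rV[R]_d -> 'M[R]_(m,n)) i :
  (forall p, derivable G p (evec R i)) ->
  unif_cont (fun p => derive G p (evec R i)) ->
  forall e : R, 0 < e -> exists2 del : R, 0 < del & forall q (h : R), h != 0 -> `|h| < del ->
   `|h^-1 *: (G (q + h *: evec R i) - G q) - derive G q (evec R i)| <= e.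
Proof.
move=> dG uG e e0; have [del del0 hdel] := uG e e0; exists del => // q h h0 hd.
apply: mx_norm_le => [|a b]; first exact: ltW.
rewrite !mxE.
have [c hc ->] := line_mvt a b dG q h.
rewrite mulrA mulVf // mul1r.
have := hdel (q + c *: evec R i) q; rewrite addrAC subrr add0r normrZ.
move=> H; apply: ltW; apply: le_lt_trans (H _).
  by have := mx_entry_le (derive G (q + c *: evec R i) (evec R i) - derive G q (evec R i)) a b; rewrite !mxE.
apply: le_lt_trans hd; apply: le_trans hc.
by rewrite -[leRHS]mulr1 ler_wpM2l // evec_norm.
Qed.

End Lip.

Section KC.
Context {R : realType} {d : nat}.
Implicit Types (G : 'rV[R]_d -> 'M[R]_(d,d)) (xi : ('rV[R]_d -> 'rV[R]_d) -> R).

Lemma rowB' (a : 'I_d) (A B : 'M[R]_(d,d)) : row a A - row a B = row a (A - B).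
Proof. by apply/rowP => j; rewrite !mxE. Qed.

Lemma subsub (x z w : 'rV[R]_d) : x - z - (x - w) = w - z.
Proof. by rewrite opprB addrC addrA subrK. Qed.

Lemma subsub2 (x y z : 'rV[R]_d) : x - z - (y - z) = x - y.
Proof. by rewrite opprB addrA subrK. Qed.

Lemma cont_sub (x z : 'rV[R]_d) : {for z, continuous (fun w : 'rV[R]_d => x - w)}.
Proof.
apply: (@cont_le _ _ _ _ id) => [|w]; first exact: cvg_id.
by rewrite subsub distrC.
Qed.
Arguments cont_sub : clear implicits.

Lemma BCvf_row G x a : continuous G -> Defs.bounded_fun G ->
  BCvf (fun z => row a (G (x - z))).
Proof.
move=> cG [M hM]; split.
  move=> z; apply: (@cont_le _ _ _ _ (fun z => G (x - z))).
    exact: continuous_comp (cont_sub x z) (cG (x - z)).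
  by move=> w; rewrite rowB' row_norm_le.
by exists M => z; apply: le_trans (row_norm_le _ _) (hM _).
Qed.

Lemma KconvE G xi x (i : 'I_1) a : Kconv G xi x i a = xi (fun z => row a (G (x - z))).
Proof. by rewrite /Kconv mxE. Qed.

Lemma Kconv_bound G M L xi x : in_M xi -> continuous G -> (forall p, `|G p| <= M) ->
  (forall p q, `|G p - G q| <= L * `|p - q|) -> 0 <= L -> 0 <= M ->
  `|Kconv G xi x| <= wnorm xi * (M + L).
Proof.
move=> hxi cG bG lG L0 M0; apply: mx_norm_le.
  by apply: mulr_ge0; [exact: wnorm_ge0|exact: addr_ge0].
move=> i a; rewrite KconvE.
have bth := BCvf_row x a cG (ex_intro _ M bG).
apply: le_trans (wnorm_bound hxi bth _ L0) _.
  move=> z w; rewrite rowB'; apply: le_trans (row_norm_le _ _) _.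
  by apply: le_trans (lG _ _) _; rewrite subsub distrC.
apply: ler_wpM2l; first exact: wnorm_ge0.
rewrite lerD2r; apply: supnorm_le => z.
exact: le_trans (row_norm_le _ _) (bG _).
Qed.

Lemma Kconv_cont G xi : in_M xi -> continuous G -> Defs.bounded_fun G -> unif_cont G ->
  continuous (Kconv G xi).
Proof.
move=> hxi cG bG uG.
suff H : forall x : 'rV[R]_d, Kconv G xi @ x --> Kconv G xi x by [].
move=> x; apply/(cvgrPdist_le (FF := nbhs_filter x)) => e e0.
have [c c0 hc] := xi_bnd hxi.
have ec : 0 < e / (c + 1) by rewrite divr_gt0 // ltr_pwDr.
have [del del0 hdel] := uG _ ec.
have Hn : \forall y \near x, `|x - y| < del :=
  @cvgr_dist_lt _ _ _ _ (nbhs_filter x) id x cvg_id del del0.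
apply: (filterS _ Hn) => y hy.
apply: mx_norm_le => [|i a]; first exact: ltW.
rewrite !mxE -xiB //; try exact: BCvf_row.
apply: le_trans (hc _ _) _; first by apply: BCvfB; exact: BCvf_row.
apply: (@le_trans _ _ (c * (e / (c + 1)))).
  apply: ler_wpM2l => //; apply: supnorm_le => z.
  rewrite rowB'; apply: le_trans (row_norm_le _ _) _; apply: ltW; apply: hdel.
  by rewrite subsub2.
rewrite mulrA ler_pdivrMr ?ltr_pwDr //; lra.
Qed.

End KC.

Section KD.
Context {R : realType} {d : nat}.
Implicit Types (G : 'rV[R]_d -> 'M[R]_(d,d)) (xi : ('rV[R]_d -> 'rV[R]_d) -> R).

Lemma Kconv_der G i xi x : in_M xi -> continuous G -> Defs.bounded_fun G ->
  (forall p, derivable G p (evec R i)) ->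
  continuous (fun p => derive G p (evec R i)) ->
  Defs.bounded_fun (fun p => derive G p (evec R i)) ->
  unif_cont (fun p => derive G p (evec R i)) ->
  derivable (Kconv G xi) x (evec R i) /\
  derive (Kconv G xi) x (evec R i) = Kconv (fun p => derive G p (evec R i)) xi x.
Proof.
move=> hxi cG bG dG cGi bGi uGi.
set Gi := fun p => derive G p (evec R i) in cGi bGi uGi *.
have H : (fun h : R => h^-1 *: ((Kconv G xi \o shift x) (h *: evec R i) - Kconv G xi x))
           @ 0^' --> Kconv Gi xi x.
  apply/cvgrPdist_le => e e0.
  have [c c0 hc] := xi_bnd hxi.
  have ec : 0 < e / (c + 1) by rewrite divr_gt0 // ltr_pwDr.
  have [del del0 hdel] := dq_unif dG uGi _ ec.
  near=> h.
  have h0 : h != 0 by near: h; exact: nbhs_dnbhs_neq.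
  have hd : `|h| < del by near: h; exact: dnbhs0_lt.
  apply: mx_norm_le => [|j a]; first exact: ltW.
  rewrite !mxE /shift.
  have b1 := BCvf_row (h *: evec R i + x) a cG bG.
  have b0 := BCvf_row x a cG bG.
  have bi := BCvf_row x a cGi bGi.
  rewrite -xiB // -xiZ //; last exact: BCvfB.
  rewrite -xiB //; last by apply: BCvfZ; exact: BCvfB.
  apply: le_trans (hc _ _) _.
    by apply: BCvfB => //; apply: BCvfZ; exact: BCvfB.
  apply: (@le_trans _ _ (c * (e / (c + 1)))); last first.
    rewrite mulrA ler_pdivrMr ?ltr_pwDr //; lra.
  apply: ler_wpM2l => //; apply: supnorm_le => z.
  have -> : row a (Gi (x - z)) - h^-1 *: (row a (G (h *: evec R i + x - z)) - row a (G (x - z)))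
     = row a (Gi (x - z) - h^-1 *: (G (x - z + h *: evec R i) - G (x - z))).
    apply/rowP => k; rewrite !mxE; congr (_ - _ * (_ - _)).
    by rewrite [h *: _ + x]addrC addrAC.
  apply: le_trans (row_norm_le _ _) _; rewrite distrC.
  exact: hdel.
split; last exact: cvg_lim H.
by apply/cvg_ex; exists (Kconv Gi xi x).
Unshelve. all: by end_near. Qed.

End KD.

Section Fin.
Context {R : realType} {d : nat}.

Lemma le_sum_one (F : 'I_d -> R) j : (forall i, 0 <= F i) -> F j <= \sum_i F i.
Proof. by move=> F0; rewrite (bigD1 j) //= lerDl sumr_ge0. Qed.

Lemma fin_I (F : 'I_d -> R -> Prop) : (forall i M M', F i M -> M <= M' -> F i M') ->
  (forall i, exists M, F i M) -> exists M, 0 <= M /\ forall i, F i M.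
Proof.
move=> mono H; have [f hf] := choice H.
exists (\sum_i `|f i|); split; first exact: sumr_ge0.
move=> i; apply: mono (hf i) _; apply: le_trans (ler_norm _) _.
exact: (le_sum_one (fun i => `|f i|)).
Qed.

Lemma fin_seq2 (P : seq 'I_d -> R -> Prop) : (forall s M M', P s M -> M <= M' -> P s M') ->
  (forall s, (size s <= 2)%N -> exists M, P s M) ->
  exists M, 0 <= M /\ forall s, (size s <= 2)%N -> P s M.
Proof.
move=> mono H.
have H' : forall s, exists M, (size s <= 2)%N -> P s M.
  move=> s; case: (leqP (size s) 2) => hs.
    by have [M hM] := H s hs; exists M.
  by exists 0.
have [f hf] := choice H'.
pose M := `|f [::]| + \sum_i `|f [:: i]| + \sum_i \sum_j `|f [:: i; j]|.
have s1 i : `|f [:: i]| <= \sum_i `|f [:: i]| by exact: (le_sum_one (fun i => `|f [:: i]|)).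
have s2 i j : `|f [:: i; j]| <= \sum_i \sum_j `|f [:: i; j]|.
  apply: le_trans (le_sum_one (fun i => \sum_j `|f [:: i; j]|) i _).
    exact: (le_sum_one (fun j => `|f [:: i; j]|)).
  by move=> k; exact: sumr_ge0.
have g1 : 0 <= \sum_i `|f [:: i]| by exact: sumr_ge0.
have g2 : 0 <= \sum_i \sum_j `|f [:: i; j]| by apply: sumr_ge0 => k _; exact: sumr_ge0.
exists M; split; first by rewrite /M !addr_ge0.
case=> [|i [|j [|k s]]] // hs; apply: mono (hf _ hs) _; apply: le_trans (ler_norm _) _; rewrite /M.
- by rewrite -addrA lerDl addr_ge0.
- have := s1 i; have := normr_ge0 (f [::]); lra.
- have := s2 i j; have := normr_ge0 (f [::]); lra.
Qed.

End Fin.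

Section Main.
Context {R : realType} {d : nat} (K : 'rV[R]_d -> 'M[R]_(d,d)) (hK : UCb3 K).

Lemma pder_cons (V : normedModType R) i s (f : 'rV[R]_d -> V) :
  pder (i :: s) f = fun x => derive (pder s f) x (evec R i).
Proof. by []. Qed.

Let der s : (size s < 3)%N -> forall i x, derivable (pder s K) x (evec R i) := hK.1.1 s.
Let cb s : (size s <= 3)%N -> continuous (pder s K) /\ Defs.bounded_fun (pder s K) := hK.1.2 s.
Let uc s : (size s <= 2)%N -> unif_cont (pder s K) := hK.2 s.

Lemma pder_Kconv s : (size s <= 2)%N -> forall xi, in_M xi ->
  pder s (Kconv K xi) = Kconv (pder s K) xi.
Proof.
elim: s => [|i s IH] //= hs xi hxi.
have hs' : (size s <= 2)%N by apply: leq_trans (leqnSn _) hs.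
rewrite (IH hs' xi hxi); apply/funext => x.
have hs3 : (size s <= 3)%N by apply: leq_trans hs' _.
have hs3' : (size (i :: s) <= 3)%N by apply: leq_trans hs _.
have c1 : continuous (fun p => derive (pder s K) p (evec R i)) := (cb _ hs3').1.
have b1 : Defs.bounded_fun (fun p => derive (pder s K) p (evec R i)) := (cb _ hs3').2.
have u1 : unif_cont (fun p => derive (pder s K) p (evec R i)) := uc (i :: s) hs.
have d1 : forall p, derivable (pder s K) p (evec R i) := der _ (leq_ltn_trans hs' (isT : (2 < 3)%N)) i.
exact: (Kconv_der x hxi (cb _ hs3).1 (cb _ hs3).2 d1 c1 b1 u1).2.
Qed.

Lemma Kconv_sub G xi xi' (x : 'rV[R]_d) :
  Kconv G xi x - Kconv G xi' x = Kconv G (Msub xi xi') x.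
Proof. by apply/rowP => j; rewrite !mxE. Qed.

Lemma core : exists C0 : R, 0 < C0 /\ forall s, (size s <= 2)%N -> forall xi, in_M xi ->
  forall x, `|pder s (Kconv K xi) x| <= C0 * wnorm xi.
Proof.
pose P s C := forall xi, in_M xi -> forall x, `|pder s (Kconv K xi) x| <= C * wnorm xi.
have [M [M0 hM]] : exists M, 0 <= M /\ forall s, (size s <= 2)%N -> P s M.
  apply: fin_seq2.
    move=> s M M' h MM' xi hxi x; apply: le_trans (h xi hxi x) _.
    by apply: ler_wpM2r => //; exact: wnorm_ge0.
  move=> s hs.
  have hs3 : (size s <= 3)%N by apply: leq_trans hs _.
  have [cG [MG hMG]] := cb _ hs3.
  have [M' [M'0 hM']] : exists M', 0 <= M' /\ forall i p, `|derive (pder s K) p (evec R i)| <= M'.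
    apply: (@fin_I _ _ (fun i M' => forall p, `|derive (pder s K) p (evec R i)| <= M')).
      by move=> i a b h ab p; apply: le_trans (h p) ab.
    move=> i; have hs3' : (size (i :: s) <= 3)%N by [].
    have [_ [Mi hMi]] := cb _ hs3'.
    by exists Mi.
  have lipG := lip_of_der M' M'0 (fun i p => der _ (leq_ltn_trans hs (isT : (2 < 3)%N)) i p) hM'.
  exists (`|MG| + d%:R * M') => xi hxi x.
  rewrite pder_Kconv // mulrC.
  apply: Kconv_bound => //.
  - by move=> p; apply: le_trans (hMG p) (ler_norm _).
  - by rewrite mulr_ge0.
exists (M + 1); split; first by rewrite ltr_pwDr.
move=> s hs xi hxi x; apply: le_trans (hM s hs xi hxi x) _.
by apply: ler_wpM2r; [exact: wnorm_ge0 | rewrite lerDl].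
Qed.

End Main.

Section Fin2.
Context {R : realType}.
Lemma sup_le (S : set R) (b : R) : 0 <= b -> (forall r, S r -> r <= b) -> sup S <= b.
Proof.
move=> b0 H; case: (pselect (S !=set0)) => [ne|ne]; first exact: ge_sup.
have -> : S = set0 by apply/seteqP; split => // r Sr; exfalso; apply: ne; exists r.
by rewrite sup0.
Qed.
End Fin2.

Unset Implicit Arguments.

Theorem lemma3p1 (R : realType) (d : nat) (K : 'rV[R]_d -> 'M[R]_(d,d)) :
  UCb3 K ->
  let B := Kconv K in
  (forall xi, in_M xi -> Cb 2 (B xi)) /\
  (forall xi, in_M xi -> forall e : R, 0 < e -> exists2 del : R, 0 < del &
     forall xi', in_M xi' -> wnorm (Msub xi' xi) < del ->
       Cb_norm 2 (fun x => B xi' x - B xi x) < e) /\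
  (exists2 CB : R, 0 < CB &
     forall xi xi', in_M xi -> in_M xi' ->
       [/\ Cb_norm 2 (B xi) <= CB * (wnorm xi + 1),
           supnorm (fun x => B xi x - B xi' x) <= CB * wnorm (Msub xi xi') &
           sup [set r | exists (i : 'I_d) (x : 'rV[R]_d),
                  r = `|pder [:: i] (B xi) x - pder [:: i] (B xi') x|]
             <= CB * wnorm (Msub xi xi')]).
Proof.
move=> hK B; rewrite /B {B}.
have [C0 [C0p core0]] := core hK.
have der s : (size s < 3)%N -> forall i x, derivable (pder s K) x (evec R i) := hK.1.1 s.
have cb s : (size s <= 3)%N -> continuous (pder s K) /\ Defs.bounded_fun (pder s K) := hK.1.2 s.
have uc s : (size s <= 2)%N -> unif_cont (pder s K) := hK.2 s.
have diff xi xi' : (fun x => Kconv K xi x - Kconv K xi' x) = Kconv K (Msub xi xi').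
  by apply/funext => x; rewrite Kconv_sub.
have CbN eta : in_M eta -> Cb_norm 2 (Kconv K eta) <= (C0 * wnorm eta) *+ 3.
  move=> heta.
  have hj (j : nat) : (j <= 2)%N -> supnorm_ord j (Kconv K eta) <= C0 * wnorm eta.
    move=> hj; apply: sup_le.
      by apply: mulr_ge0; [exact: ltW | exact: wnorm_ge0].
    move=> r [s [x [hs ->]]]; apply: core0 => //.
    by rewrite hs.
  rewrite /Cb_norm !big_ord_recr big_ord0 /=.
  have := hj 0%N isT; have := hj 1%N isT; have := hj 2%N isT.
  set X := C0 * wnorm eta; rewrite !mulrS mulr0n; lra.
split.
  move=> xi hxi; split.
    move=> s hs i x; rewrite pder_Kconv //; last exact: ltnW.
    have hs3 : (size s <= 3)%N by apply: leq_trans (ltnW hs) _.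
    have hs3' : (size (i :: s) <= 3)%N by apply: leq_trans hs _.
    have c1 : continuous (fun p => derive (pder s K) p (evec R i)) := (cb _ hs3').1.
    have b1 : Defs.bounded_fun (fun p => derive (pder s K) p (evec R i)) := (cb _ hs3').2.
    have u1 : unif_cont (fun p => derive (pder s K) p (evec R i)) := uc (i :: s) hs.
    have d1 : forall p, derivable (pder s K) p (evec R i) := der _ (leq_trans hs (isT : (2 <= 3)%N)) i.
    exact: (Kconv_der x hxi (cb _ hs3).1 (cb _ hs3).2 d1 c1 b1 u1).1.
  move=> s hs; split; last by exists (C0 * wnorm xi) => x; exact: core0.
  rewrite pder_Kconv //.
  have hs3 : (size s <= 3)%N by apply: leq_trans hs _.
  exact: Kconv_cont hxi (cb _ hs3).1 (cb _ hs3).2 (uc _ hs).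
split.
  move=> xi hxi e e0.
  have c3 : 0 < C0 *+ 3 by rewrite mulrn_wgt0.
  exists (e / (C0 *+ 3)); first by rewrite divr_gt0.
  move=> xi' hxi' hw; rewrite diff.
  have hm := Msub_in_M hxi' hxi.
  apply: le_lt_trans (CbN _ hm) _.
  by rewrite -mulrnAl mulrC -ltr_pdivlMr.
exists (C0 *+ 3 + 1); first by rewrite -mulr_natr; lra.
move=> xi xi' hxi hxi'; have hm := Msub_in_M hxi hxi'.
have wm := wnorm_ge0 hm; have wx := wnorm_ge0 hxi.
have big : C0 * wnorm (Msub xi xi') <= (C0 *+ 3 + 1) * wnorm (Msub xi xi').
  apply: ler_wpM2r => //; rewrite -mulr_natr; lra.
have C3 : 0 <= C0 *+ 3 by apply: mulrn_wge0; exact: ltW.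
split.
- apply: le_trans (CbN _ hxi) _.
  rewrite mulrDr mulr1 mulrDl mul1r mulrnAl; lra.
- rewrite diff; apply: le_trans big; apply: supnorm_le => x.
  exact: (core0 [::]).
- apply: sup_le; first by rewrite mulr_ge0 // addr_ge0 // mulrn_wge0 // ltW.
  move=> r [i [x ->]].
  rewrite !pder_Kconv // Kconv_sub -pder_Kconv //.
  by apply: le_trans big; exact: core0.
Qed.
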